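(* Suppose the real random variable $X$ has a log-concave density $f$ (and $\mathbf P(X>0)>0$, $\mathbf P(X<0)>0$). Let $\zeta:=P-N+1$, where $P$ and $N$ are independent, $P$ has the law of $X$ conditioned on $\{X>0\}$ and $N$ has the law of $X$ conditioned on $\{X<0\}$. Then $\zeta$ takes values in $[1,\infty)$ and for all $\theta\ge0$, \[(X-\theta)\mid\{X>\theta\}\ \le_{lr}\ \zeta,\qquad -(X+\theta)\mid\{X<-\theta\}\ \le_{lr}\ \zeta.\]
   Context: A density $f$ is log-concave if $f(\theta x+(1-\theta)y)\ge f(x)^\theta f(y)^{1-\theta}$ for all $x,y\in\mathbb R$, $\theta\in[0,1]$. For real random variables $U,W$, $U\le_{lr}W$ (likelihood ratio order) means $\mathbf P(U\in A)\mathbf P(W\in B)\ge\mathbf P(U\in B)\mathbf P(W\in A)$ for all measurable $A,B\subset\mathbb R$ with $\sup A\le\inf B$; with densities this reads $f_U(u)f_W(w)\ge f_U(w)f_W(u)$ for all $u\le w$. *)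

(* Defs.v *)
From HB Require Import structures.
From mathcomp Require Import all_boot all_order all_algebra.
From mathcomp Require Import all_classical all_reals all_analysis.
Set Implicit Arguments. Unset Strict Implicit. Unset Printing Implicit Defensive.
Import Order.TTheory GRing.Theory Num.Theory.
Local Open Scope classical_set_scope.
Local Open Scope ring_scope.

Section Defs.
Variable R : realType.
Local Notation mu := (@lebesgue_measure R).

Definition is_density (f : R -> R) : Prop :=
  [/\ measurable_fun setT f, (forall x, 0 <= f x),
      mu.-integrable setT (EFin \o f) & Rintegral mu setT f = 1].

Definition log_concave (f : R -> R) : Prop :=
  forall x y t, 0 <= t <= 1 ->
    f x `^ t * f y `^ (1 - t) <= f (t * x + (1 - t) * y).

Definition dprob (f : R -> R) (D : set R) : R := Rintegral mu D f.

(* law of (X - th) | {X > th} :  A |-> P(X > th, X - th in A) / P(X > th) *)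
Definition law_right (f : R -> R) (th : R) (A : set R) : R :=
  dprob f [set x | th < x /\ A (x - th)] / dprob f [set x | th < x].

(* law of -(X + th) | {X < -th} *)
Definition law_left (f : R -> R) (th : R) (A : set R) : R :=
  dprob f [set x | x < - th /\ A (- (x + th))] / dprob f [set x | x < - th].

(* law of zeta := P - N + 1, P ~ X|{X>0}, N ~ X|{X<0}, P and N independent:
   A |-> (1/(P(X>0) P(X<0))) * int_{x>0} int_{y<0} f x f y 1_A(x - y + 1) dy dx *)
Definition law_zeta (f : R -> R) (A : set R) : R :=
  Rintegral mu [set x | 0 < x]
    (fun x => Rintegral mu [set y | y < 0]
       (fun y => f x * f y * \1_A (x - y + 1)))
  / (dprob f [set x | 0 < x] * dprob f [set y | y < 0]).

Definition lr_le (PU PW : set R -> R) : Prop :=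
  forall A B : set R, measurable A -> measurable B ->
    (ereal_sup (EFin @` A) <= ereal_inf (EFin @` B))%E ->
    PU B * PW A <= PU A * PW B.

End Defs.

(* Main.v *)
Require Import Defs.
From HB Require Import structures.
From mathcomp Require Import all_boot all_order all_algebra.
From mathcomp Require Import all_classical all_reals all_analysis.
From mathcomp Require Import measurable_realfun.
From mathcomp Require Import ring lra.
Set Implicit Arguments. Unset Strict Implicit. Unset Printing Implicit Defensive.
Import Order.TTheory GRing.Theory Num.Theory.
Local Open Scope classical_set_scope.
Local Open Scope ring_scope.

Lemma mshift (R : realType) (a : R) : measurable_fun setT (fun x : R => x + a).
Proof. apply: measurable_funD => //; exact: measurable_cst. Qed.

Definition shiftm (R : realType) (a : R) : set (measurableTypeR R) -> \bar R :=
  pushforward (@lebesgue_measure R) (fun x : R => x + a).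

Section shiftm.
Variables (R : realType) (a : R).
Let m0 : shiftm a set0 = 0%E.
Proof. by rewrite /shiftm /pushforward preimage_set0 measure0. Qed.
Let mge0 A : (0 <= shiftm a A)%E.
Proof. rewrite /shiftm /pushforward; exact: measure_ge0. Qed.
Let msig : semi_sigma_additive (shiftm a).
Proof.
move=> F mF tF mUF; rewrite /shiftm /pushforward preimage_bigcup.
apply: measure_semi_sigma_additive.
- move=> n; rewrite -[X in measurable X]setTI; apply: mshift => //; exact: mF.
- apply/trivIsetP => /= i j _ _ ij; rewrite -preimage_setI.
  by move/trivIsetP : tF => /(_ _ _ _ _ ij) ->//; rewrite preimage_set0.
- by rewrite -preimage_bigcup -[X in measurable X]setTI; apply: mshift.
Qed.
HB.instance Definition _ := isMeasure.Build _ _ _ (shiftm a) m0 mge0 msig.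
End shiftm.

Lemma lc_shift (R : realType) (f : R -> R) : (forall x, 0 <= f x) -> log_concave f ->
  forall s t d, s <= t -> 0 <= d -> f s * f (t + d) <= f (s + d) * f t.
Proof.
move=> f0 lc s t d st d0.
have [->|dpos] := eqVneq d 0.
  by rewrite !addr0 mulrC.
have dp : 0 < d by rewrite lt_def dpos d0.
have [fs0|fsp] := eqVneq (f s) 0.
  by rewrite fs0 mul0r mulr_ge0.
have [ft0|ftp] := eqVneq (f (t + d)) 0.
  by rewrite ft0 mulr0 mulr_ge0.
have den : 0 < t - s + d by lra.
set l := (t - s) / (t - s + d).
have l0 : 0 <= l by rewrite divr_ge0 //; lra.
have l1 : l <= 1 by rewrite ler_pdivrMr // mul1r; lra.
have h1 := lc s (t + d) l.
have h2 := lc s (t + d) (1 - l).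
have e1 : l * s + (1 - l) * (t + d) = s + d.
  rewrite /l; field; lra.
have e2 : (1 - l) * s + (1 - (1 - l)) * (t + d) = t.
  rewrite /l; field; lra.
rewrite e1 in h1; rewrite e2 in h2.
have H1 := h1 (ltac:(apply/andP; split => //)).
have H2 := h2 (ltac:(apply/andP; split; lra)).
apply: le_trans (ler_pM _ _ H1 H2); last 2 first.
- by rewrite mulr_ge0 // powR_ge0.
- by rewrite mulr_ge0 // powR_ge0.
have -> : f s * f (t + d) = (f s `^ l * f s `^ (1 - l)) * (f (t + d) `^ (1 - l) * f (t + d) `^ (1 - (1 - l))).
  rewrite -!powRD; last 2 first.
  - by apply/implyP => _.
  - by apply/implyP => _.
  have -> : l + (1 - l) = 1 by ring.
  have -> : (1 - l) + (1 - (1 - l)) = 1 by ring.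
  by rewrite !powRr1.
by rewrite le_eqVlt; apply/orP; left; apply/eqP; ring.
Qed.

Section S.
Variable R : realType.
Local Notation mu := (@lebesgue_measure R).

Lemma integral_shift (a : R) (g : R -> \bar R) : measurable_fun setT g ->
  (forall x, (0 <= g x)%E) -> (\int[mu]_x g (x + a)%R = \int[mu]_x g x)%E.
Proof.
move=> mg g0.
have E := @lebesgue_measure_unique R (shiftm a).
have : forall X, ocitv X -> lebesgue_measure X = shiftm a X.
  move=> _ [[b c] _ <-].
  rewrite /shiftm /pushforward /=.
  have -> : (fun x : R => x + a) @^-1` `]b, c]%classic = `]b - a, c - a]%classic.
    by apply/seteqP; split => x /=; rewrite !in_itv /= ?lerBrDr ?ltrBlDr.
  rewrite !lebesgue_measure_itv /= !lte_fin ltrBlDr subrK -EFinD.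
  by congr (if _ then _ else _); congr (_%:E); lra.
move/E => {}E.
transitivity (\int[shiftm a]_x g x)%E; last first.
  apply: eq_measure_integral => A mA _; exact/esym/E.
rewrite /shiftm ge0_integral_pushforward //=; last exact: mshift.
Qed.

Lemma swap_le (al be ga de : R -> \bar R) (a b : R) :
  (forall x, 0 <= al x)%E -> (forall x, 0 <= be x)%E ->
  (forall x, 0 <= ga x)%E -> (forall x, 0 <= de x)%E ->
  measurable_fun setT al -> measurable_fun setT be ->
  measurable_fun setT ga -> measurable_fun setT de ->
  (forall x p, al x * be p <= ga (p + a)%R * de (x + b)%R)%E ->
  ((\int[mu]_x al x) * (\int[mu]_x be x) <= (\int[mu]_x ga x) * (\int[mu]_x de x))%E.
Proof.
move=> al0 be0 ga0 de0 mal mbe mga mde H.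
have mga' : measurable_fun setT (fun x : R => ga (x + a)%R).
  by apply: measurableT_comp => //; exact: mshift.
have mde' : measurable_fun setT (fun x : R => de (x + b)%R).
  by apply: measurableT_comp => //; exact: mshift.
rewrite -(integral_shift a mga ga0) -(integral_shift b mde de0).
have ib0 : (0 <= \int[mu]_x be x)%E by exact: integral_ge0.
have ig0 : (0 <= \int[mu]_x ga (x + a)%R)%E by exact: integral_ge0.
rewrite -(ge0_integralZr mu measurableT mal (fun x _ => al0 x) ib0).
rewrite muleC -(ge0_integralZr mu measurableT mde' (fun x _ => de0 _) ig0).
apply: ge0_le_integral => //.
- by move=> x _; rewrite mule_ge0.
- by apply: emeasurable_funM => //; exact: measurable_cst.
- by apply: emeasurable_funM => //; exact: measurable_cst.
move=> x _.
rewrite -(ge0_integralZl mu measurableT mbe (fun p _ => be0 p) (al0 x)).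
rewrite muleC -(ge0_integralZr mu measurableT mga' (fun p _ => ga0 _) (de0 (x + b)%R)).
apply: ge0_le_integral => //.
all: try (by move=> p _; rewrite mule_ge0).
all: try (by apply: emeasurable_funM => //; exact: measurable_cst).
all: by move=> p _; exact: H.
Qed.


Lemma mPos : measurable [set x : R | 0 < x].
Proof.
have -> : [set x : R | 0 < x] = `]0, +oo[%classic.
  by apply/seteqP; split => x; rewrite /= in_itv /= andbT.
exact: measurable_itv.
Qed.

Lemma mNeg : measurable [set x : R | x < 0].
Proof.
have -> : [set x : R | x < 0] = `]-oo, 0[%classic.
  by apply/seteqP; split => x; rewrite /= in_itv /=.
exact: measurable_itv.
Qed.

Lemma bridge (h : R -> R) (D : set R) : measurable D -> measurable_fun setT h ->
  (forall x, 0 <= h x) -> (\int[mu]_x (h x * \1_D x)%:E < +oo)%E ->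
  (Rintegral mu D h)%:E = (\int[mu]_x (h x * \1_D x)%:E)%E.
Proof.
move=> mD mh h0 hlt.
have E : (\int[mu]_(x in D) (h x)%:E = \int[mu]_x (h x * \1_D x)%:E)%E.
  rewrite integral_mkcond; apply: eq_integral => x _.
  by rewrite /patch indicE; case: ifP => _; rewrite ?mulr1 ?mulr0.
rewrite /Rintegral E fineK // ge0_fin_numE //.
by apply: integral_ge0 => x _; rewrite lee_fin mulr_ge0.
Qed.

Section withf.
Variables (f : R -> R) (mf : measurable_fun setT f) (f0 : forall x, 0 <= f x)
  (fi : mu.-integrable setT (EFin \o f)).

Lemma bound_lty (h : R -> R) (c : R) : measurable_fun setT h ->
  (forall x, 0 <= h x) -> (forall x, h x <= c * f x) ->
  (\int[mu]_x (h x)%:E < +oo)%E.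
Proof.
move=> mh h0 hle.
apply: (le_lt_trans _ (integrable_lty measurableT (integrableZl measurableT c fi))).
apply: ge0_le_integral => //.
- by move=> x _; rewrite lee_fin.
- exact/measurable_EFinP.
- by apply: measurable_funeM; exact/measurable_EFinP.
by move=> x _; rewrite /= -EFinM lee_fin.
Qed.

Lemma ind_ge0 (A : set R) x : 0 <= (\1_A x : R).
Proof. by rewrite indicE; case: (_ \in _). Qed.

Lemma ind_le1 (A : set R) x : (\1_A x : R) <= 1.
Proof. by rewrite indicE; case: (_ \in _). Qed.

Lemma mind_comp (A : set R) (g : R -> R) : measurable A -> measurable_fun setT g ->
  measurable_fun setT (fun q : R => (\1_A (g q) : R)).
Proof.
move=> mA mg; apply: measurableT_comp => //; exact: measurable_indic.
Qed.

Definition K (A : set R) (p q : R) : R := f p * f q * \1_A (p - q + 1)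
  * \1_[set y : R | y < 0] q * \1_[set x : R | 0 < x] p.

Lemma K0 A p q : 0 <= K A p q.
Proof. by rewrite /K !mulr_ge0 // ind_ge0. Qed.

Lemma mKN A : measurable A -> measurable_fun setT (fun z : R * R =>
  f z.1 * f z.2 * \1_A (z.1 - z.2 + 1) * \1_[set y : R | y < 0] z.2).
Proof.
move=> mA.
have m1 : measurable_fun setT (fun z : R * R => f z.1).
  exact: measurableT_comp mf measurable_fst.
have m2 : measurable_fun setT (fun z : R * R => f z.2).
  exact: measurableT_comp mf measurable_snd.
have m3 : measurable_fun setT (fun z : R * R => (\1_A (z.1 - z.2 + 1) : R)).
  apply: measurableT_comp; first exact: measurable_indic.
  apply: measurable_funD; last exact: measurable_cst.
  exact: measurable_funB measurable_fst measurable_snd.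
have m4 : measurable_fun setT (fun z : R * R => (\1_[set y : R | y < 0] z.2 : R)).
  apply: measurableT_comp; [exact: measurable_indic mNeg|exact: measurable_snd].
apply: measurable_funM => //; apply: measurable_funM => //.
exact: measurable_funM.
Qed.

Lemma mK A : measurable A -> measurable_fun setT (fun z : R * R => K A z.1 z.2).
Proof.
move=> mA.
have m5 : measurable_fun setT (fun z : R * R => (\1_[set y : R | 0 < y] z.1 : R)).
  apply: measurableT_comp; [exact: measurable_indic mPos|exact: measurable_fst].
rewrite /K; apply: measurable_funM => //; exact: mKN.
Qed.


Lemma le_ind2 (x a b : R) : 0 <= x -> 0 <= a <= 1 -> 0 <= b <= 1 -> x * a * b <= x.
Proof.
move=> x0 /andP[a0 a1] /andP[b0 b1].
apply: le_trans (ler_piMr _ b1) (ler_piMr x0 a1); exact: mulr_ge0.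
Qed.

Lemma ind01 (A : set R) x : 0 <= (\1_A x : R) <= 1.
Proof. by rewrite ind_ge0 ind_le1. Qed.

Lemma intf_fin : (\int[mu]_x (f x)%:E)%E \is a fin_num.
Proof. exact: (integrable_fin_num measurableT fi). Qed.

Lemma zeta_repr A : measurable A ->
  ((Rintegral mu [set x | 0 < x] (fun x => Rintegral mu [set y | y < 0]
       (fun y => f x * f y * \1_A (x - y + 1))))%:E
   = \int[mu]_p \int[mu]_q (K A p q)%:E)%E.
Proof.
move=> mA.
set r := fun x => Rintegral _ _ _.
have mh p : measurable_fun setT (fun y => f p * f y * \1_A (p - y + 1)).
  apply: measurable_funM; first by apply: measurable_funM => //; exact: measurable_cst.
  apply: mind_comp => //.
  by apply: measurable_funD => //; apply: measurable_funB.
have mh' p : measurable_fun setT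
    (fun y => f p * f y * \1_A (p - y + 1) * \1_[set y : R | y < 0] y).
  by apply: measurable_funM => //; exact: measurable_indic mNeg.
have rE p : (r p)%:E = (\int[mu]_q (f p * f q * \1_A (p - q + 1)
                                     * \1_[set y : R | y < 0] q)%:E)%E.
  apply: bridge => //; first exact: mNeg.
  - by move=> y; rewrite !mulr_ge0 // ind_ge0.
  - apply: (@bound_lty _ (f p)) => //.
    + by move=> y; rewrite !mulr_ge0 // ind_ge0.
    + move=> y; apply: le_ind2 (ind01 _ _) (ind01 _ _).
      exact: mulr_ge0.
have mr : measurable_fun setT r.
  have -> : r = fun p => fine (fubini_F mu (fun z : R * R => (f z.1 * f z.2
       * \1_A (z.1 - z.2 + 1) * \1_[set y : R | y < 0] z.2)%:E) p).
    by apply/funext => p; rewrite /fubini_F /= -rE.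
  apply: measurableT_comp; first exact: fine_measurable.
  apply: measurable_fun_fubini_tonelli_F.
    by apply/measurable_EFinP; exact: mKN.
  by move=> z /=; rewrite lee_fin !mulr_ge0 // ind_ge0.
have r0 p : 0 <= r p.
  by apply: Rintegral_ge0 => y _; rewrite !mulr_ge0 // ind_ge0.
have mfE : measurable_fun setT (fun x => (f x)%:E).
  exact/measurable_EFinP.
have rle p : r p <= fine (\int[mu]_x (f x)%:E)%E * f p.
  rewrite -lee_fin rE EFinM fineK ?intf_fin // muleC.
  have fE0 : forall x, (0 <= (f x)%:E)%E by move=> x; rewrite lee_fin.
  rewrite -(ge0_integralZl mu measurableT mfE (fun x _ => fE0 x) (fE0 p)).
  apply: ge0_le_integral => //.
  - by move=> y _; rewrite lee_fin !mulr_ge0 // ind_ge0.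
  - by apply/measurable_EFinP; exact: mh'.
  - exact: measurable_funeM.
  by move=> y _; rewrite -EFinM lee_fin; apply: le_ind2 (ind01 _ _) (ind01 _ _); exact: mulr_ge0.
have rp0 : forall p, 0 <= r p * \1_[set x : R | 0 < x] p.
  by move=> p; rewrite mulr_ge0 // ind_ge0.
rewrite (@bridge r _ mPos mr r0); last first.
  apply: (@bound_lty _ (fine (\int[mu]_x (f x)%:E)%E)) => //.
  + by apply: measurable_funM => //; exact: measurable_indic mPos.
  + move=> p; apply: le_trans (rle p); apply: ler_piMr => //; exact: ind_le1.
apply: eq_integral => p _.
rewrite EFinM rE -ge0_integralZr //.
all: try (by apply/measurable_EFinP; exact: mh').
all: try (by move=> y _; rewrite lee_fin !mulr_ge0 // ind_ge0).
all: try (by rewrite lee_fin ind_ge0).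
all: by apply: eq_integral => q _; rewrite -EFinM /K.
Qed.

Lemma ind1 (D : set R) x : D x -> (\1_D x : R) = 1.
Proof. by move=> Dx; rewrite indicE mem_set. Qed.

Lemma ind0 (D : set R) x : ~ D x -> (\1_D x : R) = 0.
Proof. by move=> Dx; rewrite indicE memNset. Qed.

Lemma supinf_le (A B : set R) z u :
  (ereal_sup (EFin @` A) <= ereal_inf (EFin @` B))%E -> A z -> B u -> z <= u.
Proof.
move=> hAB Az Bu.
have h1 : (z%:E <= ereal_sup (EFin @` A))%E by apply: ereal_sup_ubound; exists z.
have h2 : (ereal_inf (EFin @` B) <= u%:E)%E by apply: ereal_inf_lbound; exists u.
by rewrite -lee_fin (le_trans h1 (le_trans hAB h2)).
Qed.

Lemma pw_right (lc : log_concave f) th (A B : set R) x p q : 0 <= th ->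
  (forall z u, A z -> B u -> z <= u) ->
  f x * \1_[set x | th < x /\ B (x - th)] x * K A p q <=
  f (p + (th + 1 - q)) * \1_[set x | th < x /\ A (x - th)] (p + (th + 1 - q))
    * K B (x + - (th + 1 - q)) q.
Proof.
move=> th0 hAB.
have rhs0 : 0 <= f (p + (th + 1 - q)) * \1_[set x | th < x /\ A (x - th)] (p + (th + 1 - q))
    * K B (x + - (th + 1 - q)) q by rewrite mulr_ge0 ?K0 // mulr_ge0 // ind_ge0.
have [hx|hx] := pselect ([set x | th < x /\ B (x - th)] x); last first.
  by rewrite ind0 // mulr0 mul0r.
have [hA|hA] := pselect (A (p - q + 1)); last first.
  by rewrite /K (ind0 hA) !(mulr0, mul0r).
have [hq|hq] := pselect ([set y : R | y < 0] q); last first.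
  by rewrite /K (ind0 hq) !(mulr0, mul0r).
have [hp|hp] := pselect ([set y : R | 0 < y] p); last first.
  by rewrite /K (ind0 hp) !(mulr0, mul0r).
case: hx => /= hx hB; rewrite /= in hq hp.
have zu := hAB _ _ hA hB.
rewrite /K (ind1 hA) (ind1 hq) (ind1 hp) (@ind1 [set x | th < x /\ B (x - th)] x) //.
rewrite (@ind1 [set x | th < x /\ A (x - th)]); last first.
  split; first lra.
  by have -> : p + (th + 1 - q) - th = p - q + 1 by ring.
have -> : x + - (th + 1 - q) - q + 1 = x - th by ring.
rewrite (ind1 hB).
rewrite (@ind1 [set y : R | 0 < y]); last by rewrite /=; lra.
rewrite !mulr1.
have := lc_shift f0 lc (s := p) (t := p + (th + 1 - q)) (d := x - th - (p - q + 1)).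
have -> : p + (th + 1 - q) + (x - th - (p - q + 1)) = x by ring.
have -> : p + (x - th - (p - q + 1)) = x + - (th + 1 - q) by ring.
move=> /(_ ltac:(lra) ltac:(lra)) H.
have fq := f0 q.
rewrite mulrA [X in _ <= X]mulrA; apply: ler_wpM2r => //.
by rewrite mulrC [X in _ <= X]mulrC.
Qed.

Lemma pw_left (lc : log_concave f) th (A B : set R) x p q : 0 <= th ->
  (forall z u, A z -> B u -> z <= u) ->
  f x * \1_[set x | x < - th /\ B (- (x + th))] x * K A p q <=
  f (q + - (th + 1 + p)) * \1_[set x | x < - th /\ A (- (x + th))] (q + - (th + 1 + p))
    * K B p (x + (th + 1 + p)).
Proof.
move=> th0 hAB.
have rhs0 : 0 <= f (q + - (th + 1 + p)) * \1_[set x | x < - th /\ A (- (x + th))] (q + - (th + 1 + p))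
    * K B p (x + (th + 1 + p)) by rewrite mulr_ge0 ?K0 // mulr_ge0 // ind_ge0.
have [hx|hx] := pselect ([set x | x < - th /\ B (- (x + th))] x); last first.
  by rewrite ind0 // mulr0 mul0r.
have [hA|hA] := pselect (A (p - q + 1)); last first.
  by rewrite /K (ind0 hA) !(mulr0, mul0r).
have [hq|hq] := pselect ([set y : R | y < 0] q); last first.
  by rewrite /K (ind0 hq) !(mulr0, mul0r).
have [hp|hp] := pselect ([set y : R | 0 < y] p); last first.
  by rewrite /K (ind0 hp) !(mulr0, mul0r).
case: hx => /= hx hB; rewrite /= in hq hp.
have zu := hAB _ _ hA hB.
rewrite /K (ind1 hA) (ind1 hq) (ind1 hp) (@ind1 [set x | x < - th /\ B (- (x + th))] x) //.
rewrite (@ind1 [set x | x < - th /\ A (- (x + th))]); last first.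
  split; first lra.
  by have -> : - (q + - (th + 1 + p) + th) = p - q + 1 by ring.
have -> : p - (x + (th + 1 + p)) + 1 = - (x + th) by ring.
rewrite (ind1 hB).
rewrite (@ind1 [set y : R | y < 0]); last by rewrite /=; lra.
rewrite !mulr1.
have := lc_shift f0 lc (s := x) (t := x + (th + 1 + p)) (d := - (x + th) - (p - q + 1)).
have -> : x + (th + 1 + p) + (- (x + th) - (p - q + 1)) = q by ring.
have -> : x + (- (x + th) - (p - q + 1)) = q + - (th + 1 + p) by ring.
move=> /(_ ltac:(lra) ltac:(lra)) H.
have fp := f0 p.
nra.
Qed.

Lemma mgt th : measurable [set x : R | th < x].
Proof.
have -> : [set x : R | th < x] = `]th, +oo[%classic.
  by apply/seteqP; split => x; rewrite /= in_itv /= andbT.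
exact: measurable_itv.
Qed.

Lemma mlt th : measurable [set x : R | x < th].
Proof.
have -> : [set x : R | x < th] = `]-oo, th[%classic.
  by apply/seteqP; split => x; rewrite /= in_itv /=.
exact: measurable_itv.
Qed.

Lemma mpre (g : R -> R) (B : set R) : measurable_fun setT g -> measurable B ->
  measurable (g @^-1` B).
Proof. by move=> mg mB; rewrite -[X in measurable X]setTI; exact: mg. Qed.

Lemma mDR th (B : set R) : measurable B -> measurable [set x | th < x /\ B (x - th)].
Proof.
move=> mB.
have -> : [set x | th < x /\ B (x - th)] = [set x | th < x] `&` ((fun x => x - th) @^-1` B) by [].
apply: measurableI; first exact: mgt.
by apply: mpre => //; apply: measurable_funB.
Qed.

Lemma mDL th (B : set R) : measurable B -> measurable [set x | x < - th /\ B (- (x + th))].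
Proof.
move=> mB.
have -> : [set x | x < - th /\ B (- (x + th))] =
  [set x | x < - th] `&` ((fun x => - (x + th)) @^-1` B) by [].
apply: measurableI; first exact: mlt.
apply: mpre => //; apply: measurableT_comp => //; exact: measurable_funD.
Qed.

Lemma drepr (D : set R) : measurable D ->
  ((dprob f D)%:E = \int[mu]_x (f x * \1_D x)%:E)%E.
Proof.
move=> mD; apply: bridge => //.
apply: (@bound_lty _ 1).
- by apply: measurable_funM => //; exact: measurable_indic.
- by move=> x; rewrite mulr_ge0 // ind_ge0.
- by move=> x; rewrite mul1r; apply: ler_piMr => //; exact: ind_le1.
Qed.

Lemma mK1 A q : measurable A -> measurable_fun setT (fun p => K A p q).
Proof.
move=> mA.
have -> : (fun p => K A p q) = (fun z : R * R => K A z.1 z.2) \o (fun p => (p, q)) by [].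
apply: (measurableT_comp (mK mA)).
exact: measurable_fun_pair.
Qed.

Lemma mK2 A p : measurable A -> measurable_fun setT (fun q => K A p q).
Proof.
move=> mA.
have -> : (fun q => K A p q) = (fun z : R * R => K A z.1 z.2) \o (fun q => (p, q)) by [].
apply: (measurableT_comp (mK mA)).
exact: measurable_fun_pair.
Qed.

Lemma mfind (D : set R) : measurable D -> measurable_fun setT (fun x => (f x * \1_D x)%:E).
Proof.
move=> mD; apply/measurable_EFinP; apply: measurable_funM => //; exact: measurable_indic.
Qed.

Definition NZ (A : set R) := Rintegral mu [set x | 0 < x] (fun x =>
  Rintegral mu [set y | y < 0] (fun y => f x * f y * \1_A (x - y + 1))).

Lemma EFinM' (x y : R) : ((x * y)%:E = x%:E * y%:E)%E.
Proof. exact: EFinM. Qed.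

Lemma zeta_reprN A : measurable A ->
  ((NZ A)%:E = \int[mu]_p \int[mu]_q (K A p q)%:E)%E.
Proof. exact: zeta_repr. Qed.

Lemma mKE A : measurable A -> measurable_fun setT (fun z : R * R => (K A z.1 z.2)%:E).
Proof. by move=> mA; apply/measurable_EFinP; exact: mK. Qed.

Lemma K0E A : forall z : R * R, (0 <= (K A z.1 z.2)%:E)%E.
Proof. by move=> z; rewrite lee_fin K0. Qed.

Lemma mG A : measurable A -> measurable_fun setT (fun q => \int[mu]_p (K A p q)%:E)%E.
Proof.
move=> mA; exact: (measurable_fun_fubini_tonelli_G (m1 := mu) _ (mKE mA) (K0E A)).
Qed.

Lemma mF A : measurable A -> measurable_fun setT (fun p => \int[mu]_q (K A p q)%:E)%E.
Proof.
move=> mA; exact: (measurable_fun_fubini_tonelli_F (m2 := mu) _ (mKE mA) (K0E A)).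
Qed.

Lemma right_key (lc : log_concave f) th (A B : set R) : 0 <= th ->
  measurable A -> measurable B ->
  (ereal_sup (EFin @` A) <= ereal_inf (EFin @` B))%E ->
  ((dprob f [set x | th < x /\ B (x - th)] * NZ A)%:E <=
   (dprob f [set x | th < x /\ A (x - th)] * NZ B)%:E)%E.
Proof.
move=> th0 mA mB hAB.
have hle := supinf_le hAB.
rewrite !EFinM'.
set u1 := (dprob f [set x | th < x /\ B (x - th)])%:E.
set u2 := (dprob f [set x | th < x /\ A (x - th)])%:E.
rewrite (_ : u1 = \int[mu]_x (f x * \1_[set x | th < x /\ B (x - th)] x)%:E)%E; last exact: drepr (mDR _ mB).
rewrite (_ : u2 = \int[mu]_x (f x * \1_[set x | th < x /\ A (x - th)] x)%:E)%E; last exact: drepr (mDR _ mA).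
set tA := (NZ A)%:E; set tB := (NZ B)%:E.
rewrite (_ : tA = \int[mu]_p \int[mu]_q (K A p q)%:E)%E; last exact: zeta_reprN.
rewrite (_ : tB = \int[mu]_p \int[mu]_q (K B p q)%:E)%E; last exact: zeta_reprN.
have TA := fubini_tonelli (m1 := mu) (m2 := mu) _ (mKE mA) (K0E A).
have TB := fubini_tonelli (m1 := mu) (m2 := mu) _ (mKE mB) (K0E B).
rewrite /= in TA TB; rewrite TA TB.
have cB0 : (0 <= \int[mu]_x (f x * \1_[set x | th < x /\ B (x - th)] x)%:E)%E.
  by apply: integral_ge0 => x _; rewrite lee_fin mulr_ge0 // ind_ge0.
have cA0 : (0 <= \int[mu]_x (f x * \1_[set x | th < x /\ A (x - th)] x)%:E)%E.
  by apply: integral_ge0 => x _; rewrite lee_fin mulr_ge0 // ind_ge0.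
have G0 C : forall q, (0 <= \int[mu]_p (K C p q)%:E)%E.
  by move=> q; apply: integral_ge0 => p _; rewrite lee_fin K0.
rewrite -(ge0_integralZl mu measurableT (mG mA) (fun y _ => G0 A y) cB0).
rewrite -(ge0_integralZl mu measurableT (mG mB) (fun y _ => G0 B y) cA0).
apply: (ge0_le_integral mu measurableT).
- by move=> q _; rewrite mule_ge0.
- exact: measurable_funeM (mG mA).
- exact: measurable_funeM (mG mB).
move=> q _.
apply: (@swap_le _ _ _ _ (th + 1 - q) (- (th + 1 - q))).
- by move=> x; rewrite lee_fin mulr_ge0 // ind_ge0.
- by move=> p; rewrite lee_fin K0.
- by move=> x; rewrite lee_fin mulr_ge0 // ind_ge0.
- by move=> p; rewrite lee_fin K0.
- exact: mfind (mDR _ mB).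
- by apply/measurable_EFinP; exact: mK1.
- exact: mfind (mDR _ mA).
- by apply/measurable_EFinP; exact: mK1.
move=> x p; rewrite -!EFinM lee_fin.
  exact: pw_right.
Qed.

Lemma left_key (lc : log_concave f) th (A B : set R) : 0 <= th ->
  measurable A -> measurable B ->
  (ereal_sup (EFin @` A) <= ereal_inf (EFin @` B))%E ->
  ((dprob f [set x | x < - th /\ B (- (x + th))] * NZ A)%:E <=
   (dprob f [set x | x < - th /\ A (- (x + th))] * NZ B)%:E)%E.
Proof.
move=> th0 mA mB hAB.
have hle := supinf_le hAB.
rewrite !EFinM'.
set u1 := (dprob f [set x | x < - th /\ B (- (x + th))])%:E.
set u2 := (dprob f [set x | x < - th /\ A (- (x + th))])%:E.
rewrite (_ : u1 = \int[mu]_x (f x * \1_[set x | x < - th /\ B (- (x + th))] x)%:E)%E; last exact: drepr (mDL _ mB).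
rewrite (_ : u2 = \int[mu]_x (f x * \1_[set x | x < - th /\ A (- (x + th))] x)%:E)%E; last exact: drepr (mDL _ mA).
set tA := (NZ A)%:E; set tB := (NZ B)%:E.
rewrite (_ : tA = \int[mu]_p \int[mu]_q (K A p q)%:E)%E; last exact: zeta_reprN.
rewrite (_ : tB = \int[mu]_p \int[mu]_q (K B p q)%:E)%E; last exact: zeta_reprN.
have cB0 : (0 <= \int[mu]_x (f x * \1_[set x | x < - th /\ B (- (x + th))] x)%:E)%E.
  by apply: integral_ge0 => x _; rewrite lee_fin mulr_ge0 // ind_ge0.
have cA0 : (0 <= \int[mu]_x (f x * \1_[set x | x < - th /\ A (- (x + th))] x)%:E)%E.
  by apply: integral_ge0 => x _; rewrite lee_fin mulr_ge0 // ind_ge0.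
have F0 C : forall p, (0 <= \int[mu]_q (K C p q)%:E)%E.
  by move=> p; apply: integral_ge0 => q _; rewrite lee_fin K0.
rewrite -(ge0_integralZl mu measurableT (mF mA) (fun y _ => F0 A y) cB0).
rewrite -(ge0_integralZl mu measurableT (mF mB) (fun y _ => F0 B y) cA0).
apply: (ge0_le_integral mu measurableT).
- by move=> p _; rewrite mule_ge0.
- exact: measurable_funeM (mF mA).
- exact: measurable_funeM (mF mB).
move=> p _.
apply: (@swap_le _ _ _ _ (- (th + 1 + p)) (th + 1 + p)).
- by move=> x; rewrite lee_fin mulr_ge0 // ind_ge0.
- by move=> q; rewrite lee_fin K0.
- by move=> x; rewrite lee_fin mulr_ge0 // ind_ge0.
- by move=> q; rewrite lee_fin K0.
- exact: mfind (mDL _ mB).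
- by apply/measurable_EFinP; exact: mK2.
- exact: mfind (mDL _ mA).
- by apply/measurable_EFinP; exact: mK2.
move=> x q; rewrite -!EFinM lee_fin.
  exact: pw_left.
Qed.

Lemma Kfact p q : K `[1, +oo[%classic p q =
  (f p * \1_[set x : R | 0 < x] p) * (f q * \1_[set y : R | y < 0] q).
Proof.
have [hq|hq] := pselect ([set y : R | y < 0] q); last first.
  by rewrite /K (ind0 hq) !(mulr0, mul0r).
have [hp|hp] := pselect ([set y : R | 0 < y] p); last first.
  by rewrite /K (ind0 hp) !(mulr0, mul0r).
rewrite /K (ind1 hq) (ind1 hp) (@ind1 `[1, +oo[%classic) ?mulr1 //.
by rewrite /= in_itv /= andbT; rewrite /= in hp hq; lra.
Qed.

Lemma NZ1 : (NZ `[1, +oo[%classic)%:E =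
  ((dprob f [set x : R | 0 < x]) * (dprob f [set y : R | y < 0]))%:E.
Proof.
rewrite EFinM'.
set u1 := (dprob f [set x : R | 0 < x])%:E.
set u2 := (dprob f [set y : R | y < 0])%:E.
rewrite (_ : u1 = \int[mu]_x (f x * \1_[set x : R | 0 < x] x)%:E)%E; last exact: drepr mPos.
rewrite (_ : u2 = \int[mu]_x (f x * \1_[set y : R | y < 0] x)%:E)%E; last exact: drepr mNeg.
set t := (NZ _)%:E.
rewrite (_ : t = \int[mu]_p \int[mu]_q (K `[1, +oo[%classic p q)%:E)%E; last first.
  by apply: zeta_reprN; exact: measurable_itv.
have mP := mfind mPos; have mN := mfind mNeg.
have i0 : (0 <= \int[mu]_x (f x * \1_[set y : R | y < 0] x)%:E)%E.
  by apply: integral_ge0 => x _; rewrite lee_fin mulr_ge0 // ind_ge0.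
rewrite -(ge0_integralZr mu measurableT mP _ i0); last first.
  by move=> x _; rewrite lee_fin mulr_ge0 // ind_ge0.
apply: eq_integral => p _.
rewrite -(ge0_integralZl mu measurableT mN); last 2 first.
- by move=> x _; rewrite lee_fin mulr_ge0 // ind_ge0.
- by rewrite lee_fin mulr_ge0 // ind_ge0.
by apply: eq_integral => q _; rewrite -EFinM' Kfact.
Qed.

End withf.
End S.

Unset Implicit Arguments.

Theorem lemma3p1 (R : realType) (f : R -> R) :
  is_density f -> log_concave f ->
  0 < dprob f [set x | 0 < x] -> 0 < dprob f [set x | x < 0] ->
  law_zeta f `[1, +oo[ = 1 /\
  (forall th : R, 0 <= th ->
     (0 < dprob f [set x | th < x] -> lr_le (law_right f th) (law_zeta f)) /\
     (0 < dprob f [set x | x < - th] -> lr_le (law_left f th) (law_zeta f))).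
Proof.
move=> [mf f0 fi _] lc hP hN.
set dd := dprob f [set x | 0 < x] * dprob f [set x | x < 0].
have dd0 : 0 < dd by rewrite /dd mulr_gt0.
have lzE A : law_zeta f A = NZ f A / dd by [].
split.
  rewrite lzE.
  transitivity (dd / dd); last by rewrite divff // gt_eqF.
  congr (_ / _); exact: (EFin_inj (NZ1 mf f0 fi)).
move=> th th0; split => hc A B mA mB hAB.
- rewrite /law_right !lzE.
  have key := right_key mf f0 fi lc th0 mA mB hAB.
  rewrite lee_fin in key.
  rewrite mulrACA [X in _ <= X]mulrACA.
  apply: ler_wpM2r => //.
  by rewrite mulr_ge0 // invr_ge0 ltW.
- rewrite /law_left !lzE.
  have key := left_key mf f0 fi lc th0 mA mB hAB.
  rewrite lee_fin in key.
  rewrite mulrACA [X in _ <= X]mulrACA.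
  apply: ler_wpM2r => //.
  by rewrite mulr_ge0 // invr_ge0 ltW.
Qed.
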